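(* Let $R\in\mathbb{R}^{d\times d}$ be a real symmetric random matrix with zero diagonal whose entries have mean zero and are bounded in absolute value by $1$ (not necessarily i.i.d.). Let $\rho\in(0,1)$ and let $B\in\{0,1\}^{d\times d}$ be a symmetric random matrix with entries $b_{i,j}=b_{j,i}$, where the $b_{i,j}$, $i<j$, are i.i.d. Bernoulli$(\rho)$. Let $A=R\circ B$, where $\circ$ denotes the entrywise (Hadamard) product. Let $\mathcal{E}\in\{-1,1\}^{d\times d}$ be a symmetric random matrix, independent of $A$, with i.i.d. Rademacher entries $\varepsilon_{i,j}$ for $j<i$ and $\varepsilon_{i,j}=\varepsilon_{j,i}$. Then $$\mathbb{E}\|A\circ\mathcal{E}\|_\infty\le K_1 d^{1/2}\rho^{1/4}+K_2 d^{3/4}\rho^{1/2},$$ where $K_1,K_2$ are universal constants.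
   Context: $\|\cdot\|_\infty$ denotes the operator norm (largest singular value) of a matrix. *)

(* Defs.v *)
From HB Require Import structures.
From mathcomp Require Import all_boot all_order all_algebra.
From mathcomp Require Import all_classical all_reals all_analysis.
Set Implicit Arguments. Unset Strict Implicit. Unset Printing Implicit Defensive.
Import Order.TTheory GRing.Theory Num.Theory.
Local Open Scope classical_set_scope.
Local Open Scope ring_scope.

Definition vnorm2 (R : realType) (n : nat) (x : 'cV[R]_n) : R :=
  Num.sqrt (\sum_(i < n) x i 0 ^+ 2).

(* Operator norm ||M||_infty = largest singular value = sup_{|x|_2<=1} |Mx|_2 *)
Definition opnorm (R : realType) (n : nat) (M : 'M[R]_n) : R :=
  sup [set vnorm2 (M *m x) | x in [set x : 'cV[R]_n | vnorm2 x <= 1]].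

Definition hadamard (R : ringType) (m n : nat) (A B : 'M[R]_(m, n)) : 'M[R]_(m, n) :=
  \matrix_(i, j) (A i j * B i j).

Definition mutually_independent {d} {T : measurableType d} {R : realType}
  (P : probability T R) (I : finType) (S : {set I}) (X : I -> T -> R) : Prop :=
  forall (J : {set I}), J \subset S ->
  forall (F : I -> set R), (forall k, measurable (F k)) ->
  P (\big[setI/setT]_(k in J) (X k @^-1` F k)) =
  ((\prod_(k in J) fine (P (X k @^-1` F k)))%:E)%E.

(* Independence of two families of real random variables (the sigma-algebras
   they generate are independent): checked on the generating pi-system. *)
Definition independent_families {d} {T : measurableType d} {R : realType}
  (P : probability T R) (I1 I2 : finType) (X : I1 -> T -> R) (Y : I2 -> T -> R)
  : Prop :=
  forall (J1 : {set I1}) (J2 : {set I2}) (F1 : I1 -> set R) (F2 : I2 -> set R),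
  (forall k, measurable (F1 k)) -> (forall k, measurable (F2 k)) ->
  P ((\big[setI/setT]_(k in J1) (X k @^-1` F1 k)) `&`
     (\big[setI/setT]_(k in J2) (Y k @^-1` F2 k))) =
  (P (\big[setI/setT]_(k in J1) (X k @^-1` F1 k)) *
   P (\big[setI/setT]_(k in J2) (Y k @^-1` F2 k)))%E.

(* Main.v *)
Require Import Defs.
From HB Require Import structures.
From mathcomp Require Import all_boot all_order all_algebra.
From mathcomp Require Import all_classical all_reals all_analysis.
From mathcomp Require Import ring lra zify.
Import Order.TTheory GRing.Theory Num.Theory.
Local Open Scope classical_set_scope.
Local Open Scope ring_scope.

Set Implicit Arguments. Unset Strict Implicit. Unset Printing Implicit Defensive.

Section EAPI.
Context {R : realType} {dT : measure_display} {T : measurableType dT}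
  (P : probability T R).

Definition bm (f : T -> R) :=
  measurable_fun setT f /\ exists M : R, forall w, `|f w| <= M.

Lemma bm_int f : bm f -> P.-integrable setT (EFin \o f).
Proof.
move=> [mf [M hM]]; apply: measurable_bounded_integrable => //.
  by apply: (le_lt_trans (probability_le1 P measurableT)); rewrite ltry.
exists M; split; first exact: num_real.
by move=> M' hM' w _; exact: le_trans (hM w) (ltW hM').
Qed.

Definition Ex (f : T -> R) : R := \int[P]_(w in setT) f w.

Lemma ExE f : bm f -> ('E_P[f] = (Ex f)%:E)%E.
Proof.
move=> bf; rewrite unlock /Ex /Rintegral fineK //.
exact: integrable_fin_num (bm_int bf).
Qed.

Lemma bmD f g : bm f -> bm g -> bm (fun w => f w + g w).
Proof.
move=> [mf [M hM]] [mg [N hN]]; split; first exact: measurable_realfun.measurable_funD.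
exists (M + N) => w; apply: le_trans (ler_normD _ _) _; exact: lerD.
Qed.

Lemma bmB f g : bm f -> bm g -> bm (fun w => f w - g w).
Proof.
move=> [mf [M hM]] [mg [N hN]]; split; first exact: measurable_realfun.measurable_funB.
exists (M + N) => w; apply: le_trans (ler_normB _ _) _; exact: lerD.
Qed.

Lemma bm_norm f : bm f -> bm (fun w => `|f w|).
Proof.
move=> [mf [M hM]]; split.
  exact: measurableT_comp (@measurable_realfun.normr_measurable _ _) mf.
by exists M => w; rewrite normr_id.
Qed.

Lemma bmM f g : bm f -> bm g -> bm (fun w => f w * g w).
Proof.
move=> [mf [M hM]] [mg [N hN]]; split; first exact: measurable_realfun.measurable_funM.
exists (M * N) => w; rewrite normrM; apply: ler_pM => //.
Qed.

Lemma bmC c : bm (fun _ => c).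
Proof. split; first exact: measurable_cst. by exists `|c|. Qed.

Lemma bmI (A : set T) : measurable A -> bm (\1_A).
Proof.
move=> mA; split; first exact: measurable_realfun.measurable_indic.
exists 1 => w; rewrite /indic; case: (w \in A); rewrite ?normr1 ?normr0 //.
Qed.

Lemma bm_sum (I : Type) (s : seq I) (F : I -> T -> R) :
  (forall i, bm (F i)) -> bm (fun w => \sum_(i <- s) F i w).
Proof.
move=> hF; elim: s => [|a s IH].
  by under [X in bm X]funext do rewrite big_nil; exact: bmC.
by under [X in bm X]funext do rewrite big_cons; exact: bmD.
Qed.

Lemma bm_prod (I : Type) (s : seq I) (F : I -> T -> R) :
  (forall i, bm (F i)) -> bm (fun w => \prod_(i <- s) F i w).
Proof.
move=> hF; elim: s => [|a s IH].
  by under [X in bm X]funext do rewrite big_nil; exact: bmC.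
by under [X in bm X]funext do rewrite big_cons; exact: bmM.
Qed.

Lemma ExD f g : bm f -> bm g -> Ex (fun w => f w + g w) = Ex f + Ex g.
Proof. by move=> bf bg; rewrite /Ex RintegralD //; exact: bm_int. Qed.

Lemma ExB f g : bm f -> bm g -> Ex (fun w => f w - g w) = Ex f - Ex g.
Proof. by move=> bf bg; rewrite /Ex RintegralB //; exact: bm_int. Qed.

Lemma ExZ c f : bm f -> Ex (fun w => c * f w) = c * Ex f.
Proof. by move=> bf; rewrite /Ex RintegralZl //; exact: bm_int. Qed.

Lemma ExC c : Ex (fun _ => c) = c.
Proof.
rewrite /Ex Rintegral_cst //; set Q := fine _; suff -> : Q = 1 by rewrite mulr1.
by rewrite /Q (_ : 1 = fine 1%E) //; congr fine; exact: (probability_setT P).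
Qed.

Lemma ExI (A : set T) : measurable A -> Ex (\1_A) = fine (P A).
Proof.
move=> mA; have := ExE (bmI mA); rewrite expectation_indic // => h.
by rewrite h.
Qed.

Lemma Ex_le f g : bm f -> bm g -> (forall w, f w <= g w) -> Ex f <= Ex g.
Proof. by move=> bf bg fg; rewrite /Ex le_Rintegral //; exact: bm_int. Qed.

Lemma Ex_sum (I : Type) (s : seq I) (F : I -> T -> R) :
  (forall i, bm (F i)) -> Ex (fun w => \sum_(i <- s) F i w) = \sum_(i <- s) Ex (F i).
Proof.
move=> hF; elim: s => [|a s IH].
  by under eq_fun do rewrite big_nil; rewrite ExC big_nil.
rewrite big_cons -IH -ExD //; last exact: bm_sum.
by under eq_fun do rewrite big_cons.
Qed.

Lemma Ex_norm f : bm f -> `|Ex f| <= Ex (fun w => `|f w|).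
Proof. by move=> bf; rewrite /Ex le_normr_Rintegral //; exact: bm_int. Qed.

End EAPI.


Lemma ge0_le_E {R : realType} {dT : measure_display} {T : measurableType dT}
  (P : probability T R) (f g : T -> R) :
  (forall w, 0 <= f w) -> (forall w, f w <= g w) -> ('E_P[f] <= 'E_P[g])%E.
Proof.
move=> f0 fg; have g0 w : 0 <= g w by apply: le_trans (fg w).
rewrite unlock ge0_integralE; last by move=> x _; rewrite lee_fin.
rewrite ge0_integralE; last by move=> x _; rewrite lee_fin.
apply: le_ereal_sup => _ [h hf <-]; exists h => // x; apply: le_trans (hf x) _.
by rewrite /restrict /patch; case: ifP => _ //; rewrite lee_fin.
Qed.


Section Det.
Context {R : realType}.

Lemma amgm (c u v : R) : 0 < c -> u * v <= (c * u ^+ 2 + v ^+ 2 / c) / 2.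
Proof.
move=> c0.
have e : (c * u ^+ 2 + v ^+ 2 / c) / 2 - u * v = (c * u - v) ^+ 2 / (2 * c).
  by field; rewrite gt_eqF.
rewrite -subr_ge0 e; apply: divr_ge0; first exact: sqr_ge0.
by rewrite mulr_ge0 // ltW.
Qed.

Lemma sqr_sum (I : Type) (r : seq I) (a : I -> R) :
  (\sum_(i <- r) a i) ^+ 2 = \sum_(i <- r) \sum_(k <- r) a i * a k.
Proof. by rewrite expr2 mulr_suml; apply: eq_bigr => i _; rewrite mulr_sumr. Qed.

Definition Qf n (M : 'M[R]_n) : R :=
  \sum_(i < n) \sum_(k < n) (\sum_(j < n) M j i * M j k) ^+ 2.

Lemma Qf_ge0 n (M : 'M[R]_n) : 0 <= Qf M.
Proof. by apply: sumr_ge0 => i _; apply: sumr_ge0 => k _; exact: sqr_ge0. Qed.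

Lemma vec_bound n (M : 'M[R]_n) (x : 'cV[R]_n) (s : R) : 0 < s ->
  vnorm2 x <= 1 -> vnorm2 (M *m x) <= 3 / 4 * s + Qf M / (4 * s ^+ 3).
Proof.
move=> s0 hx.
set X := \sum_(i < n) x i 0 ^+ 2.
have X0 : 0 <= X by apply: sumr_ge0 => i _; exact: sqr_ge0.
have X1 : X <= 1.
  move: hx; rewrite /vnorm2 -/X => h.
  by rewrite -(sqr_sqrtr X0) -(expr1n _ 2) ler_pXn2r // ?nnegrE ?sqrtr_ge0.
set Y := \sum_(j < n) (M *m x) j 0 ^+ 2.
have Y0 : 0 <= Y by apply: sumr_ge0 => i _; exact: sqr_ge0.
set N := fun i k => \sum_(j < n) M j i * M j k.
have eY : Y = \sum_(i < n) \sum_(k < n) (x i 0 * x k 0) * N i k.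
  rewrite /Y.
  under eq_bigr do rewrite mxE sqr_sum.
  rewrite exchange_big /=; apply: eq_bigr => i _.
  rewrite exchange_big /=; apply: eq_bigr => k _.
  rewrite /N mulr_sumr; apply: eq_bigr => j _; ring.
set c := s ^+ 2.
have c0 : 0 < c by rewrite exprn_gt0.
have hY : Y <= (c * X ^+ 2 + Qf M / c) / 2.
  rewrite eY.
  apply: (@le_trans _ _ (\sum_(i < n) \sum_(k < n)
     ((c * (x i 0 * x k 0) ^+ 2 + N i k ^+ 2 / c) / 2))).
    by apply: ler_sum => i _; apply: ler_sum => k _; exact: amgm.
  rewrite le_eqVlt; apply/orP; left; apply/eqP.
  rewrite /Qf /X sqr_sum -/N.
  rewrite mulr_sumr mulr_suml -big_split /= mulr_suml; apply: eq_bigr => i _.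
  rewrite mulr_sumr mulr_suml -big_split /= mulr_suml; apply: eq_bigr => k _.
  rewrite /N; field; rewrite gt_eqF //.
set y := vnorm2 (M *m x).
have y0 : 0 <= y by exact: sqrtr_ge0.
have ey : y ^+ 2 = Y by rewrite /y /vnorm2 sqr_sqrtr.
have hy : y <= (s + y ^+ 2 / s) / 2.
  have := amgm y 1 s0; rewrite mulr1 expr1n.
  have -> : (s * y ^+ 2 + 1 / s) = s * y ^+ 2 + 1 / s by [].
  move=> _.
  have e : (s + y ^+ 2 / s) / 2 - y = (y - s) ^+ 2 / (2 * s).
    by field; rewrite gt_eqF.
  by rewrite -subr_ge0 e divr_ge0 ?sqr_ge0 // mulr_ge0 // ltW.
have QM := Qf_ge0 M.
have X2 : X ^+ 2 <= 1 by rewrite -(expr1n _ 2) ler_pXn2r // ?nnegrE.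
apply: (le_trans hy); rewrite ey.
have hY' : Y <= (c + Qf M / c) / 2.
  apply: (le_trans hY); rewrite ler_pM2r // lerD2r.
  by rewrite -{2}(mulr1 c) ler_pM2l.
have e : 3 / 4 * s + Qf M / (4 * s ^+ 3) = (s + (c + Qf M / c) / 2 / s) / 2.
  by rewrite /c; field; rewrite gt_eqF.
rewrite e ler_pM2r // lerD2l ler_pM2r ?invr_gt0 //.
Qed.

Lemma opnorm_bound n (M : 'M[R]_n) (s : R) : 0 < s ->
  0 <= opnorm M /\ opnorm M <= 3 / 4 * s + Qf M / (4 * s ^+ 3).
Proof.
move=> s0.
set S := [set vnorm2 (M *m x) | x in [set x : 'cV[R]_n | vnorm2 x <= 1]].
have S0 : S 0.
  exists 0; rewrite /= /vnorm2.
    by rewrite big1 ?sqrtr0 // => i _; rewrite mxE expr0n.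
  by rewrite mulmx0 big1 ?sqrtr0 // => i _; rewrite mxE expr0n.
have ub : ubound S (3 / 4 * s + Qf M / (4 * s ^+ 3)).
  by move=> _ [x hx <-]; exact: vec_bound.
split.
  apply: sup_upper_bound => //; split; first by exists 0.
  by exists (3 / 4 * s + Qf M / (4 * s ^+ 3)).
by apply: ge_sup => //; exists 0.
Qed.

End Det.


Lemma bigsetIP (T : Type) (I : eqType) (r : seq I) (Pr : pred I) (A : I -> set T) w :
  (\big[setI/setT]_(i <- r | Pr i) A i) w <-> (forall i, i \in r -> Pr i -> A i w).
Proof.
elim: r => [|a r IH]; first by rewrite big_nil; split.
rewrite big_cons; case: ifP => Pa.
  split.
    move=> [Aa /IH h] i; rewrite inE => /orP[/eqP -> //|ir]; exact: h.
  move=> h; split; first by apply: h => //; rewrite mem_head.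
  by apply/IH => i ir; apply: h; rewrite inE ir orbT.
rewrite IH; split.
  move=> h i; rewrite inE => /orP[/eqP -> |ir]; first by rewrite Pa.
  exact: h.
by move=> h i ir; apply: h; rewrite inE ir orbT.
Qed.

Section Prod.
Context {R : realType}.

Lemma prod_le1 n (a : 'I_n -> R) : (forall m, `|a m| <= 1) -> `|\prod_m a m| <= 1.
Proof.
by move=> h; rewrite normr_prod; apply: prodr_ile1 => m _; rewrite normr_ge0 h.
Qed.

Lemma prod_diff n (a b : 'I_n -> R) :
  (forall m, `|a m| <= 1) -> (forall m, `|b m| <= 1) ->
  `|\prod_m a m - \prod_m b m| <= \sum_m `|a m - b m|.
Proof.
elim: n a b => [|n IH] a b ha hb.
  by rewrite !big_ord0 subrr normr0.
rewrite !big_ord_recr /=.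
set A := \prod_(i < n) a (widen_ord (leqnSn n) i).
set B := \prod_(i < n) b (widen_ord (leqnSn n) i).
have hA : `|A - B| <= \sum_(i < n) `|a (widen_ord (leqnSn n) i) - b (widen_ord (leqnSn n) i)|.
  by apply: IH => m.
have hB : `|B| <= 1 by apply: prod_le1.
have e : A * a ord_max - B * b ord_max = (A - B) * a ord_max + B * (a ord_max - b ord_max).
  by ring.
rewrite e; apply: (le_trans (ler_normD _ _)); rewrite !normrM; apply: lerD.
  by rewrite -[X in _ <= X]mulr1; apply: ler_pM.
by rewrite -[X in _ <= X]mul1r; apply: ler_pM.
Qed.

End Prod.


Section Grid.
Context {R : realType} (N : nat).
Let Nr : R := N.+1%:R.
Let K := (N.+1).*2.+1.
Definition gv (k : 'I_K) : R := (k%:R - Nr) / Nr.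

Lemma Nr_gt0 : 0 < Nr. Proof. by rewrite /Nr ltr0n. Qed.

Lemma gv_bound k : `|gv k| <= 1.
Proof.
have hk : (k <= (N.+1).*2)%N by rewrite -ltnS ltn_ord.
have hk' : k%:R <= 2 * Nr :> R.
  by rewrite /Nr -natrM ler_nat mul2n.
have k0 : 0 <= k%:R :> R by [].
have N0 := Nr_gt0.
rewrite /gv ler_norml; apply/andP; split.
  by rewrite ler_pdivlMr //; lra.
by rewrite ler_pdivrMr //; lra.
Qed.

Lemma gv_diff (a b : 'I_K) : (a < b)%N -> gv a + Nr^-1 <= gv b.
Proof.
move=> ab; have : (a.+1 <= b)%N by [].
rewrite -(ler_nat R) -natr1 => h.
have N0 := Nr_gt0.
rewrite -subr_ge0.
have -> : gv b - (gv a + Nr^-1) = (b%:R - (a%:R + 1)) / Nr.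
  by rewrite /gv; field; rewrite gt_eqF.
by rewrite divr_ge0 ?subr_ge0 // ltW.
Qed.

Lemma gv_exists z : `|z| <= 1 -> exists k : 'I_K, gv k <= z /\ z < gv k + Nr^-1.
Proof.
move=> hz.
have hz' : -1 <= z <= 1 by rewrite -ler_norml.
have N0 := Nr_gt0.
have P0 : gv ord0 <= z.
  by rewrite /gv /= sub0r mulNr divff ?gt_eqF //; case/andP: hz'.
case: (@arg_maxnP _ ord0 (fun k => gv k <= z) (fun k => nat_of_ord k) P0).
move=> k hk hmax; exists k; split => //.
have [kl|kr] := ltnP k (N.+1).*2.
  have k1 : (k.+1 < K)%N by rewrite /K ltnS.
  rewrite ltNge; apply/negP => h.
  have := hmax (Ordinal k1); rewrite /=.
  have -> : gv (Ordinal k1) = gv k + Nr^-1.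
    by rewrite /gv /= -natr1; field; rewrite gt_eqF.
  by move=> /(_ h); rewrite ltnn.
have ek : k%:R = 2 * Nr :> R.
  have kk : nat_of_ord k = (N.+1).*2.
    by apply/eqP; rewrite eqn_leq kr andbT -ltnS ltn_ord.
  by rewrite kk /Nr -natrM mul2n.
have -> : gv k = 1 by rewrite /gv ek; field; rewrite gt_eqF.
case/andP: hz' => _ h1; apply: (le_lt_trans h1).
by rewrite ltrDl invr_gt0.
Qed.

Lemma gv_uniq (a b : 'I_K) z : gv a <= z -> z < gv a + Nr^-1 ->
  gv b <= z -> z < gv b + Nr^-1 -> a = b.
Proof.
move=> h1 h2 h3 h4; apply/val_inj => /=.
have [ab|ba|//] := ltngtP a b.
  by move: (lt_le_trans h2 (gv_diff ab)); rewrite ltNge h3.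
by move: (lt_le_trans h4 (gv_diff ba)); rewrite ltNge h1.
Qed.

End Grid.

Lemma near_le {R : realType} (a b e : R) : b <= a -> a < b + e -> `|a - b| <= e.
Proof. by move=> h1 h2; rewrite ler_norml; apply/andP; split; lra. Qed.

Lemma mpre {dT : measure_display} {T : measurableType dT} {R : realType}
  (f : T -> R) (A : set R) :
  measurable_fun setT f -> measurable A -> measurable (f @^-1` A).
Proof. by move=> mf mA; rewrite -[X in measurable X]setTI; exact: mf. Qed.

Lemma mbigI {dT : measure_display} {T : measurableType dT} (I : Type) (r : seq I)
  (Pr : pred I) (A : I -> set T) : (forall i, measurable (A i)) ->
  measurable (\big[setI/setT]_(i <- r | Pr i) A i).
Proof.
move=> hA; elim: r => [|a r IH]; first by rewrite big_nil.
by rewrite big_cons; case: (Pr a) => //; exact: measurableI.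
Qed.

Lemma eps_zero {R : realType} (x : R) (c : R) :
  (forall N : nat, `|x| <= c / N.+1%:R) -> x = 0.
Proof.
move=> h; apply/eqP; rewrite -normr_le0; rewrite leNgt; apply/negP => x0.
have c0 : 0 <= c.
  by have := h 0%N; rewrite divr1 => /(le_trans (normr_ge0 _)).
have := archi_boundP (divr_ge0 c0 (ltW x0)).
set N := Num.Def.archi_bound _ => hN.
have := h N; rewrite ler_pdivlMr ?ltr0n // => h2.
have h3 : c / `|x| < N.+1%:R by apply: (lt_le_trans hN); rewrite ler_nat.
move: h3; rewrite ltr_pdivrMr // mulrC => h3.
by move: (lt_le_trans h3 h2); rewrite ltxx.
Qed.

Section Fact.
Context {R : realType} {dT : measure_display} {T : measurableType dT}
  (P : probability T R).

Lemma factor (n : nat) (Z : 'I_n -> T -> R) (F : set T) :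
  (forall m, measurable_fun setT (Z m)) -> (forall m w, `|Z m w| <= 1) ->
  measurable F ->
  (forall G : 'I_n -> set R, (forall m, measurable (G m)) ->
     P ((\big[setI/setT]_(m < n) (Z m @^-1` G m)) `&` F) =
     (P (\big[setI/setT]_(m < n) (Z m @^-1` G m)) * P F)%E) ->
  Ex P (fun w => (\prod_m Z m w) * \1_F w) =
  Ex P (fun w => \prod_m Z m w) * fine (P F).
Proof.
move=> mZ bZ mF hind.
set g := fun w => \prod_m Z m w.
have bZm m : bm (Z m) by split => //; exists 1.
have bg : bm g by apply: bm_prod.
have bF : bm (\1_F : T -> R) by exact: bmI.
set pF := fine (P F).
have pF01 : 0 <= pF <= 1.
  rewrite /pF -ExI //; apply/andP; split.
    rewrite -(ExC P 0); apply: Ex_le; [exact: bmC | done | move=> w].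
    by rewrite /indic; case: (_ \in _).
  rewrite -(ExC P 1); apply: Ex_le; [done | exact: bmC | move=> w].
  by rewrite /indic; case: (_ \in _).
apply/eqP; rewrite -subr_eq0; apply/eqP.
apply: (@eps_zero _ _ (2 * n%:R)) => N.
set Nr : R := N.+1%:R.
have Nr0 : 0 < Nr by rewrite /Nr ltr0n.
set K := (N.+1).*2.+1.
pose Ik (k : 'I_K) := [set z : R | gv k <= z /\ z < gv k + Nr^-1].
have mIk k : measurable (Ik k).
  have -> : Ik k = `[gv k, gv k + Nr^-1[%classic.
    apply/funext => z; apply/propext; rewrite /Ik /= in_itv /=.
    by split => [[-> ->]//|/andP[-> ->]].
  exact: measurable_itv.
pose H (s : {ffun 'I_n -> 'I_K}) := \big[setI/setT]_(m < n) (Z m @^-1` Ik (s m)).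
have mH s : measurable (H s) by apply: mbigI => m; apply: mpre.
pose c (s : {ffun 'I_n -> 'I_K}) : R := \prod_m gv (s m).
pose D (w : T) : R := \sum_s c s * \1_(H s) w.
have ex_s w : exists s, H s w.
  have [f hf] : exists f : 'I_n -> 'I_K, forall m, Ik (f m) (Z m w).
    apply: (@fin_all_exists _ (fun _ => 'I_K) (fun m k => Ik k (Z m w))) => m.
    have [k hk] := gv_exists N (bZ m w); by exists k.
  exists (finfun f); apply/bigsetIP => m _ _ /=; rewrite ffunE; exact: hf.
have uniq_s w s t : H s w -> H t w -> s = t.
  move=> /bigsetIP hs /bigsetIP ht; apply/ffunP => m.
  have [h1 h2] := hs m (mem_index_enum _) isT.
  have [h3 h4] := ht m (mem_index_enum _) isT.
  exact: gv_uniq h1 h2 h3 h4.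
have Dw w s : H s w -> D w = c s.
  move=> hs; rewrite /D (bigD1 s) //= big1 ?addr0.
    by rewrite indicE mem_set // mulr1.
  move=> t ts; rewrite indicE; case: (boolP (w \in H t)) => [/set_mem ht|]; last by rewrite mulr0.
  by move: ts; rewrite (uniq_s w t s ht hs) eqxx.
have gD w : `|g w - D w| <= n%:R / Nr.
  have [s hs] := ex_s w; rewrite (Dw w s hs) /g /c.
  apply: le_trans (prod_diff _ _) _ => [m|m|]; [exact: bZ | exact: gv_bound |].
  apply: (@le_trans _ _ (\sum_(m < n) Nr^-1)).
    apply: ler_sum => m _; move/bigsetIP: hs => /(_ m (mem_index_enum _) isT) [h1 h2].
    exact: near_le.
  by rewrite sumr_const card_ord mulr_natl.
have bD : bm D.
  apply: bm_sum => s; apply: bmM; [exact: bmC | exact: bmI].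
have eD : Ex P D = \sum_s c s * fine (P (H s)).
  rewrite /D Ex_sum; last by move=> s; apply: bmM; [exact: bmC | exact: bmI].
  by apply: eq_bigr => s _; rewrite ExZ ?ExI //; exact: bmI.
have eDF : Ex P (fun w => D w * \1_F w) = Ex P D * pF.
  have -> : (fun w => D w * \1_F w) = (fun w => \sum_s c s * \1_(H s `&` F) w).
    apply/funext => w; rewrite /D mulr_suml; apply: eq_bigr => s _.
    by rewrite indicI /= mulrA.
  rewrite Ex_sum; last by move=> s; apply: bmM; [exact: bmC | apply: bmI; exact: measurableI].
  rewrite eD mulr_suml; apply: eq_bigr => s _.
  rewrite ExZ; last by apply: bmI; exact: measurableI.
  rewrite ExI; last exact: measurableI.
  rewrite hind; last by move=> m; exact: mIk.
  rewrite fineM; [by rewrite mulrA | apply: fin_num_measure; exact: mH | apply: fin_num_measure; exact: mF].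
have bgF : bm (fun w => g w * \1_F w) by apply: bmM.
have bDF : bm (fun w => D w * \1_F w) by apply: bmM.
have e1 : `|Ex P (fun w => g w * \1_F w) - Ex P (fun w => D w * \1_F w)| <= n%:R / Nr.
  rewrite -ExB //.
  have bb := bmB bgF bDF.
  apply: le_trans (Ex_norm P bb) _.
  rewrite -[X in _ <= X](ExC P); apply: Ex_le; [exact: bm_norm | exact: bmC | move=> w].
  rewrite -mulrBl normrM; apply: le_trans (gD w).
  by rewrite -[X in _ <= X]mulr1 ler_pM // indicE; case: (_ \in _); rewrite ?normr1 ?normr0.
have e2 : `|Ex P g - Ex P D| <= n%:R / Nr.
  rewrite -ExB //.
  have bb := bmB bg bD.
  apply: le_trans (Ex_norm P bb) _.
  rewrite -[X in _ <= X](ExC P); apply: Ex_le; [exact: bm_norm | exact: bmC | exact: gD].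
have e : Ex P (fun w => g w * \1_F w) - Ex P g * pF =
  (Ex P (fun w => g w * \1_F w) - Ex P (fun w => D w * \1_F w)) + (Ex P D - Ex P g) * pF.
  by rewrite eDF; ring.
rewrite e; apply: le_trans (ler_normD _ _) _.
case/andP: pF01 => p0 p1.
have h2 : `|(Ex P D - Ex P g) * pF| <= n%:R / Nr.
  rewrite normrM (ger0_norm p0) distrC -[X in _ <= X]mulr1.
  by apply: ler_pM.
apply: le_trans (lerD e1 h2) _.
by rewrite le_eqVlt; apply/orP; left; apply/eqP; field; rewrite gt_eqF.
Qed.

End Fact.


Section Sums.
Context {R : realFieldType} (d : nat) (rho : R) (hr : 0 <= rho).

Definition Vb (x y : 'I_d) : R := if x == y then rho else rho ^+ 2.
Definition Ub (i k j l : 'I_d) : R :=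
  (if j == l then Vb i k else 0) + (if i == k then Vb j l else 0).

Lemma sum_delta (x : 'I_d) (f : 'I_d -> R) :
  \sum_(l < d) (if x == l then f l else 0) = f x.
Proof.
rewrite (bigD1 x) //= eqxx big1 ?addr0 // => l /negbTE.
by rewrite eq_sym => ->.
Qed.

Lemma sumV : \sum_(x < d) \sum_(y < d) Vb x y <= d%:R * rho + d%:R ^+ 2 * rho ^+ 2.
Proof.
apply: (@le_trans _ _ (\sum_(x < d) \sum_(y < d) ((if x == y then rho else 0) + rho ^+ 2))).
  apply: ler_sum => x _; apply: ler_sum => y _; rewrite /Vb.
  case: ifP => _; first by rewrite lerDl exprn_ge0.
  by rewrite add0r.
rewrite le_eqVlt; apply/orP; left; apply/eqP.
under eq_bigr do rewrite big_split /= sum_delta sumr_const card_ord.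
rewrite sumr_const card_ord; ring.
Qed.


Lemma sumU : \sum_(i < d) \sum_(k < d) \sum_(j < d) \sum_(l < d) Ub i k j l <=
  2 * (d%:R ^+ 2 * rho + d%:R ^+ 3 * rho ^+ 2).
Proof.
set SV := \sum_(x < d) \sum_(y < d) Vb x y.
have e : \sum_(i < d) \sum_(k < d) \sum_(j < d) \sum_(l < d) Ub i k j l = SV *+ d + SV *+ d.
  transitivity (\sum_(i < d) \sum_(k < d) (Vb i k *+ d + (if i == k then SV else 0))).
    apply: eq_bigr => i _; apply: eq_bigr => k _.
    rewrite /Ub; under eq_bigr => j _ do rewrite big_split /= (sum_delta j (fun _ => Vb i k)).
    rewrite big_split /= sumr_const card_ord; congr (_ + _).
    case: eqP => _; first by [].
    by rewrite big1 // => j _; rewrite big1.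
  under eq_bigr => i _ do rewrite big_split /= (sum_delta i (fun _ => SV)).
  rewrite big_split /= sumr_const card_ord; congr (_ + _).
  by rewrite /SV -sumrMnl; apply: eq_bigr => i _; rewrite -sumrMnl.
rewrite e; have h := sumV.
have hd : (0 : R) <= d%:R by [].
apply: (@le_trans _ _ ((d%:R * rho + d%:R ^+ 2 * rho ^+ 2) *+ d + (d%:R * rho + d%:R ^+ 2 * rho ^+ 2) *+ d)).
  by apply: lerD; rewrite -[X in X <= _]mulr_natr -[X in _ <= X]mulr_natr ler_wpM2r.
rewrite le_eqVlt; apply/orP; left; apply/eqP.
rewrite -mulr2n -mulrnA -mulr_natr; ring.
Qed.

End Sums.


Lemma powX {R : realType} (a r : R) (n m : nat) : 0 <= a -> r * n%:R = m%:R ->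
  (a `^ r) ^+ n = a ^+ m.
Proof.
move=> a0 h; rewrite -powR_mulrn ?powR_ge0 // -powRrM h powR_mulrn //.
Qed.

Lemma pow4_sup {R : realFieldType} (u v : R) : 0 <= u -> 0 <= v ->
  u ^+ 4 + v ^+ 4 <= (u + v) ^+ 4.
Proof.
move=> u0 v0; rewrite -subr_ge0.
have -> : (u + v) ^+ 4 - (u ^+ 4 + v ^+ 4) = u * v * (4 * u ^+ 2 + 6 * u * v + 4 * v ^+ 2).
  by ring.
by apply: mulr_ge0; [apply: mulr_ge0 | rewrite !addr_ge0 // ?mulr_ge0 // ?exprn_ge0].
Qed.

Lemma final_arith {R : realType} (d rho c : R) : 0 < d -> 0 < rho ->
  c <= 2 * (d ^+ 2 * rho + d ^+ 3 * rho ^+ 2) ->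
  let t := 2 * (d `^ (1 / 2) * rho `^ (1 / 4) + d `^ (3 / 4) * rho `^ (1 / 2)) in
  0 < t /\ 3 / 4 * t + c / (4 * t ^+ 3) <= t.
Proof.
move=> d0 r0 hc t.
set u := d `^ (1 / 2) * rho `^ (1 / 4).
set v := d `^ (3 / 4) * rho `^ (1 / 2).
have u0 : 0 < u by rewrite mulr_gt0 // powR_gt0.
have v0 : 0 < v by rewrite mulr_gt0 // powR_gt0.
have t0 : 0 < t by rewrite /t mulr_gt0 // addr_gt0.
split => //.
have u4 : u ^+ 4 = d ^+ 2 * rho.
  rewrite /u exprMn (powX (n:=4) (m:=2) (ltW d0)) ?(powX (n:=4) (m:=1) (ltW r0)) ?expr1 //.
    by rewrite mulrC; apply/eqP; rewrite -subr_eq0; apply/eqP; field.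
  by apply/eqP; rewrite -subr_eq0; apply/eqP; field.
have v4 : v ^+ 4 = d ^+ 3 * rho ^+ 2.
  rewrite /v exprMn (powX (n:=4) (m:=3) (ltW d0)) ?(powX (n:=4) (m:=2) (ltW r0)) //.
    by apply/eqP; rewrite -subr_eq0; apply/eqP; field.
  by apply/eqP; rewrite -subr_eq0; apply/eqP; field.
have ht : c <= t ^+ 4.
  apply: (le_trans hc); rewrite /t exprMn -u4 -v4.
  have := pow4_sup (ltW u0) (ltW v0).
  have h16 : (2 : R) ^+ 4 = 16 by rewrite !exprS expr0; ring.
  rewrite h16 => h; have h2 : 0 <= u ^+ 4 + v ^+ 4 by rewrite addr_ge0 // exprn_ge0 // ltW.
  apply: (@le_trans _ _ (16 * (u ^+ 4 + v ^+ 4))).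
    by apply: ler_wpM2r => //; rewrite ler_nat.
  by apply: ler_wpM2l.
have t3 : 0 < 4 * t ^+ 3 by rewrite mulr_gt0 // exprn_gt0.
have e : t = 3 / 4 * t + t ^+ 4 / (4 * t ^+ 3) by field; rewrite gt_eqF.
rewrite [X in _ <= X]e lerD2l ler_pM2r ?invr_gt0 //.
Qed.


Lemma mi_split {R : realType} {dT : measure_display} {T : measurableType dT}
  (P : probability T R) (I : finType) (S : {set I}) (X : I -> T -> R)
  (q : I) (A : set R) (G : I -> set R) :
  mutually_independent P S X -> q \in S -> measurable A ->
  (forall k, measurable (G k)) -> G q = setT ->
  P (\big[setI/setT]_(k in S) (X k @^-1` (if k == q then A else G k))) =
  (fine (P (X q @^-1` A)) * fine (P (\big[setI/setT]_(k in S) (X k @^-1` G k))))%:E.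
Proof.
move=> hi qS mA mG Gq.
rewrite hi //; last by move=> k; case: (k == q).
rewrite hi // (bigD1 q) //= eqxx [X in _ = (_ * X)%:E](bigD1 q) //=.
have -> : fine (P (X q @^-1` G q)) = 1.
  by rewrite Gq preimage_setT; exact: (congr1 fine (probability_setT P)).
rewrite mul1r; congr (_ * _)%:E.
by apply: eq_bigr => k /andP[_ /negbTE ->].
Qed.

Definition lo {d} (u v : 'I_d) : 'I_d * 'I_d := if (u < v)%N then (u, v) else (v, u).
Definition hi {d} (u v : 'I_d) : 'I_d * 'I_d := if (v < u)%N then (u, v) else (v, u).

Lemma hi_dist d (i k j l : 'I_d) : j != i -> j != k -> l != i -> l != k -> j != l -> i != k ->
  [&& hi j k != hi j i, hi l i != hi j i, hi l k != hi j i, hi l i != hi j k &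
      (hi l k != hi j k) && (hi l k != hi l i)].
Proof.
rewrite /hi -!val_eqE /= => *.
by repeat case: ifP => ?; rewrite !xpair_eqE -!val_eqE /=; lia.
Qed.

Section Main.
Context {R : realType} (d : nat) (rho : R) {dT : measure_display} {T : measurableType dT}
  (P : probability T R) (Rm Bm Em : T -> 'M[R]_d).
Context (hrho : 0 < rho < 1)
  (mR : forall i j, measurable_fun setT (fun w => Rm w i j))
  (sR : forall w i j, Rm w i j = Rm w j i)
  (dR : forall w i, Rm w i i = 0)
  (bR : forall w i j, `|Rm w i j| <= 1)
  (mB : forall i j, measurable_fun setT (fun w => Bm w i j))
  (sB : forall w i j, Bm w i j = Bm w j i)
  (vB : forall w i j, Bm w i j = 0 \/ Bm w i j = 1)
  (pB : forall i j : 'I_d, (i < j)%N -> P ((fun w => Bm w i j) @^-1` [set 1]) = rho%:E)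
  (iB : mutually_independent P [set p : 'I_d * 'I_d | (p.1 < p.2)%N]
    (fun p w => Bm w p.1 p.2))
  (mE : forall i j, measurable_fun setT (fun w => Em w i j))
  (sE : forall w i j, Em w i j = Em w j i)
  (vE : forall w i j, Em w i j = 1 \/ Em w i j = -1)
  (pE : forall i j : 'I_d, (j < i)%N ->
     P ((fun w => Em w i j) @^-1` [set 1]) = (1 / 2)%:E)
  (iE : mutually_independent P [set p : 'I_d * 'I_d | (p.2 < p.1)%N]
    (fun p w => Em w p.1 p.2))
  (iAE : independent_families P
    (fun p w => hadamard (Rm w) (Bm w) p.1 p.2) (fun p w => Em w p.1 p.2)).

Lemma m1 : measurable [set (1 : R)].
Proof. exact: measurable_set1. Qed.

Lemma Blo w (u v : 'I_d) : Bm w (lo u v).1 (lo u v).2 = Bm w u v.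
Proof. by rewrite /lo; case: ifP => //= _; rewrite sB. Qed.

Lemma Ehi w (u v : 'I_d) : Em w (hi u v).1 (hi u v).2 = Em w u v.
Proof. by rewrite /hi; case: ifP => //= _; rewrite sE. Qed.

Lemma loS (u v : 'I_d) : u != v -> lo u v \in [set p : 'I_d * 'I_d | (p.1 < p.2)%N]%SET.
Proof.
rewrite inE /lo -val_eqE /=; case: ifP => /= h1 h2 //; lia.
Qed.

Lemma hiS (u v : 'I_d) : u != v -> hi u v \in [set p : 'I_d * 'I_d | (p.2 < p.1)%N]%SET.
Proof.
rewrite inE /hi -val_eqE /=; case: ifP => /= h1 h2 //; lia.
Qed.

Lemma pB' (u v : 'I_d) : u != v -> P ((fun w => Bm w u v) @^-1` [set 1]) = rho%:E.
Proof.
move=> uv; have := loS uv; rewrite inE => /pB.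
have -> // : (fun w => Bm w (lo u v).1 (lo u v).2) = (fun w => Bm w u v).
by apply/funext => w; rewrite Blo.
Qed.

Lemma Eb2 (c x y : 'I_d) : x != c -> y != c ->
  Ex P (fun w => Bm w c x * Bm w c y) = if x == y then rho else rho ^+ 2.
Proof.
move=> xc yc.
have cx : c != x by rewrite eq_sym.
have cy : c != y by rewrite eq_sym.
pose E1 := (fun w => Bm w c x) @^-1` [set 1].
pose E2 := (fun w => Bm w c y) @^-1` [set 1].
have mE1 : measurable E1 by apply: mpre => //; exact: m1.
have mE2 : measurable E2 by apply: mpre => //; exact: m1.
have -> : (fun w => Bm w c x * Bm w c y) = \1_(E1 `&` E2).
  apply/funext => w; rewrite indicE /E1 /E2.
  case: (vB w c x) => h1; case: (vB w c y) => h2; rewrite h1 h2.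
  - rewrite mulr0 (_ : (w \in _) = false) //; apply/negbTE/negP => /set_mem [/= h _].
    by move: h; rewrite h1 => /eqP; rewrite eq_sym oner_eq0.
  - rewrite mul0r (_ : (w \in _) = false) //; apply/negbTE/negP => /set_mem [/= h _].
    by move: h; rewrite h1 => /eqP; rewrite eq_sym oner_eq0.
  - rewrite mulr0 (_ : (w \in _) = false) //; apply/negbTE/negP => /set_mem [_ /= h].
    by move: h; rewrite h2 => /eqP; rewrite eq_sym oner_eq0.
  - by rewrite mulr1 mem_set.
rewrite ExI; last exact: measurableI.
case: eqP => [exy|/eqP nxy].
  subst y; rewrite setIid /E1 pB' //.
set S := [set p : 'I_d * 'I_d | (p.1 < p.2)%N]%SET.
have nl : lo c x != lo c y.
  move: xc yc nxy; rewrite /lo -!val_eqE /=.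
  by case: ifP => h1; case: ifP => h2; rewrite xpair_eqE -!val_eqE /=; lia.
pose X := fun (p : 'I_d * 'I_d) w => Bm w p.1 p.2.
pose G := fun k : 'I_d * 'I_d => if k == lo c y then [set (1:R)] else setT.
have -> : E1 `&` E2 = \big[setI/setT]_(k in S)
    (X k @^-1` (if k == lo c x then [set 1] else G k)).
  apply/funext => w; apply/propext; rewrite bigsetIP; split.
    move=> [h1 h2] k _ kS; rewrite /G /X.
    case: eqP => [->|_]; first by rewrite /= Blo.
    by case: eqP => [->|_] //=; rewrite Blo.
  move=> h; split.
    by have := h _ (mem_index_enum _) (loS cx); rewrite eqxx /X /= Blo.
  have := h _ (mem_index_enum _) (loS cy).
  by rewrite eq_sym in nl; rewrite (negbTE nl) /G eqxx /X /= Blo.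
rewrite (mi_split (q := lo c x)) //; last 3 first.
- exact: loS cx.
- by move=> k; rewrite /G; case: (_ == _) => //; exact: m1.
- by rewrite /G (negbTE nl).
have -> : \big[setI/setT]_(k in S) (X k @^-1` G k) = \big[setI/setT]_(k in S)
    (X k @^-1` (if k == lo c y then [set 1] else (fun _ => setT) k)) by [].
rewrite (mi_split (q := lo c y)) //; last first.
  exact: loS cy.
have -> : \big[setI/setT]_(k in S) (X k @^-1` setT) = setT.
  by rewrite big1 // => k _; rewrite preimage_setT.
have e1 : X (lo c x) @^-1` [set 1] = E1.
  by apply/funext => w; rewrite /X /E1 /= Blo.
have e2 : X (lo c y) @^-1` [set 1] = E2.
  by apply/funext => w; rewrite /X /E2 /= Blo.
rewrite e1 e2 /E1 /E2 !pB' //= expr2.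
by rewrite (congr1 fine (probability_setT P)) mulr1.
Qed.


Definition Xa (p : 'I_d * 'I_d) (w : T) := hadamard (Rm w) (Bm w) p.1 p.2.
Definition Ye (q : 'I_d * 'I_d) (w : T) := Em w q.1 q.2.

Lemma XaE p w : Xa p w = Rm w p.1 p.2 * Bm w p.1 p.2.
Proof. by rewrite /Xa mxE. Qed.

Lemma mXa p : measurable_fun setT (Xa p).
Proof.
have -> : Xa p = (fun w => Rm w p.1 p.2 * Bm w p.1 p.2) by apply/funext => w; rewrite XaE.
exact: measurable_realfun.measurable_funM.
Qed.

Lemma bXa p w : `|Xa p w| <= 1.
Proof.
rewrite XaE normrM; case: (vB w p.1 p.2) => ->; rewrite ?normr0 ?mulr0 //.
by rewrite normr1 mulr1.
Qed.

Lemma bYe q w : `|Ye q w| <= 1.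
Proof. by rewrite /Ye; case: (vE w q.1 q.2) => ->; rewrite ?normrN normr1. Qed.

Lemma mYe q : measurable_fun setT (Ye q).
Proof. exact: mE. Qed.

Lemma oE (n : nat) (h h' : (n < 7)%N) : Ordinal h = Ordinal h'.
Proof. by congr Ordinal; exact: bool_irrelevance. Qed.

Definition mm w (u v : 'I_d) := hadamard (hadamard (Rm w) (Bm w)) (Em w) u v.
Definition Tt (i k j l : 'I_d) w := mm w j i * mm w j k * (mm w l i * mm w l k).

Section Zero.
Variables (i k j l : 'I_d).
Hypotheses (hji : j != i) (hjk : j != k) (hli : l != i) (hlk : l != k)
  (hjl : j != l) (hik : i != k).

Let p0 := (j, i). Let p1 := (j, k). Let p2 := (l, i). Let p3 := (l, k).
Let q1 := hi j i. Let q2 := hi j k. Let q3 := hi l i. Let q4 := hi l k.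
Let SE := [set p : 'I_d * 'I_d | (p.2 < p.1)%N]%SET.

Let d10 : p1 != p0. Proof. by rewrite /p0 /p1 xpair_eqE negb_and eq_sym hik orbT. Qed.
Let d20 : p2 != p0. Proof. by rewrite /p0 /p2 xpair_eqE negb_and eq_sym hjl. Qed.
Let d30 : p3 != p0. Proof. by rewrite /p0 /p3 xpair_eqE negb_and eq_sym hjl. Qed.
Let d21 : p2 != p1. Proof. by rewrite /p1 /p2 xpair_eqE negb_and eq_sym hjl. Qed.
Let d31 : p3 != p1. Proof. by rewrite /p1 /p3 xpair_eqE negb_and eq_sym hjl. Qed.
Let d32 : p3 != p2. Proof. by rewrite /p2 /p3 xpair_eqE negb_and eq_sym hik orbT. Qed.

Let hd := hi_dist hji hjk hli hlk hjl hik.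
Let e21 : q2 != q1. Proof. by case/and5P: hd. Qed.
Let e31 : q3 != q1. Proof. by case/and5P: hd. Qed.
Let e41 : q4 != q1. Proof. by case/and5P: hd. Qed.
Let e32 : q3 != q2. Proof. by case/and5P: hd. Qed.
Let e42 : q4 != q2. Proof. by case/and5P: hd => _ _ _ _ /andP[]. Qed.
Let e43 : q4 != q3. Proof. by case/and5P: hd => _ _ _ _ /andP[]. Qed.

Let Zl : seq (T -> R) := [:: Xa p0; Xa p1; Xa p2; Xa p3; Ye q2; Ye q3; Ye q4].
Let Z (m : 'I_7) := nth (fun _ => 0) Zl m.

Let TtZ w : Tt i k j l w = (\prod_(m < 7) Z m w) * Ye q1 w.
Proof.
rewrite !big_ord_recl big_ord0 /Z /Zl /= /Tt /mm /Ye /q1 /q2 /q3 /q4 !Ehi /Xa /p0 /p1 /p2 /p3 /=.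
rewrite !mxE; ring.
Qed.

Let q1S : q1 \in SE. Proof. exact: hiS. Qed.
Let q2S : q2 \in SE. Proof. exact: hiS. Qed.
Let q3S : q3 \in SE. Proof. by apply: hiS. Qed.
Let q4S : q4 \in SE. Proof. exact: hiS. Qed.

Let hind (A : set R) : measurable A ->
  forall G : 'I_7 -> set R, (forall m, measurable (G m)) ->
  P ((\big[setI/setT]_(m < 7) (Z m @^-1` G m)) `&` (Ye q1 @^-1` A)) =
  (P (\big[setI/setT]_(m < 7) (Z m @^-1` G m)) * P (Ye q1 @^-1` A))%E.
Proof.
move=> mA G mG.
pose g0 := G (Ordinal (isT : (0 < 7)%N)). pose g1 := G (Ordinal (isT : (1 < 7)%N)).
pose g2 := G (Ordinal (isT : (2 < 7)%N)). pose g3 := G (Ordinal (isT : (3 < 7)%N)).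
pose g4 := G (Ordinal (isT : (4 < 7)%N)). pose g5 := G (Ordinal (isT : (5 < 7)%N)).
pose g6 := G (Ordinal (isT : (6 < 7)%N)).
pose G1 p := if p == p0 then g0 else if p == p1 then g1 else if p == p2 then g2
  else if p == p3 then g3 else setT.
pose G2 q := if q == q2 then g4 else if q == q3 then g5 else if q == q4 then g6 else setT.
have mG1 p : measurable (G1 p).
  by rewrite /G1; repeat case: ifP => _; first [exact: mG | exact: measurableT].
have mG2 q : measurable (G2 q).
  by rewrite /G2; repeat case: ifP => _; first [exact: mG | exact: measurableT].
pose HX := \big[setI/setT]_(p in [set: 'I_d * 'I_d]%SET) (Xa p @^-1` G1 p).
pose HYA := \big[setI/setT]_(q in SE) (Ye q @^-1` (if q == q1 then A else G2 q)).
pose HY := \big[setI/setT]_(q in SE) (Ye q @^-1` G2 q).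
have G2q1 : G2 q1 = setT.
  by rewrite /G2 ![q1 == _]eq_sym (negbTE e21) (negbTE e31) (negbTE e41).
have cB : \big[setI/setT]_(m < 7) (Z m @^-1` G m) = HX `&` HY.
  apply/funext => w; apply/propext; split.
    move/bigsetIP => h.
    have h0 := h (Ordinal (isT : (0 < 7)%N)) (mem_index_enum _) isT.
    have h1 := h (Ordinal (isT : (1 < 7)%N)) (mem_index_enum _) isT.
    have h2 := h (Ordinal (isT : (2 < 7)%N)) (mem_index_enum _) isT.
    have h3 := h (Ordinal (isT : (3 < 7)%N)) (mem_index_enum _) isT.
    have h4 := h (Ordinal (isT : (4 < 7)%N)) (mem_index_enum _) isT.
    have h5 := h (Ordinal (isT : (5 < 7)%N)) (mem_index_enum _) isT.
    have h6 := h (Ordinal (isT : (6 < 7)%N)) (mem_index_enum _) isT.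
    rewrite /Z /Zl /= in h0 h1 h2 h3 h4 h5 h6.
    split; apply/bigsetIP.
      move=> p _ _; rewrite /G1.
      case: eqP => [->|_]; first exact: h0.
      case: eqP => [->|_]; first exact: h1.
      case: eqP => [->|_]; first exact: h2.
      by case: eqP => [->|_]; first exact: h3.
    move=> q _ _; rewrite /G2.
    case: eqP => [->|_]; first exact: h4.
    case: eqP => [->|_]; first exact: h5.
    by case: eqP => [->|_]; first exact: h6.
  move=> [/bigsetIP hX /bigsetIP hY]; apply/bigsetIP => m _ _.
  case: m => [[|[|[|[|[|[|[|m]]]]]]] hm] //=; rewrite (oE hm isT) /Z /Zl /=.
  - by have := hX p0 (mem_index_enum _) ltac:(by rewrite !inE); rewrite /G1 eqxx.
  - by have := hX p1 (mem_index_enum _) ltac:(by rewrite !inE); rewrite /G1 (negbTE d10) eqxx.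
  - by have := hX p2 (mem_index_enum _) ltac:(by rewrite !inE); rewrite /G1 (negbTE d20) (negbTE d21) eqxx.
  - have := hX p3 (mem_index_enum _) ltac:(by rewrite !inE).
    by rewrite /G1 (negbTE d30) (negbTE d31) (negbTE d32) eqxx.
  - by have := hY q2 (mem_index_enum _) q2S; rewrite /G2 eqxx.
  - by have := hY q3 (mem_index_enum _) q3S; rewrite /G2 (negbTE e32) eqxx.
  - by have := hY q4 (mem_index_enum _) q4S; rewrite /G2 (negbTE e42) (negbTE e43) eqxx.
have eHYA : HYA = HY `&` (Ye q1 @^-1` A).
  apply/funext => w; apply/propext; split.
    move/bigsetIP => h; split.
      apply/bigsetIP => q _ qS; have := h q (mem_index_enum _) qS.
      by case: eqP => [->|//]; rewrite G2q1.
    by have := h q1 (mem_index_enum _) q1S; rewrite eqxx.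
  move=> [/bigsetIP h hA]; apply/bigsetIP => q _ qS.
  by case: eqP => [->|_] //; exact: h.
have cA : (\big[setI/setT]_(m < 7) (Z m @^-1` G m)) `&` (Ye q1 @^-1` A) = HX `&` HYA.
  by rewrite cB eHYA setIA.
rewrite cA cB.
rewrite [X in X = _]iAE //; last by move=> q; case: (_ == _).
rewrite [X in _ = (X * _)%E]iAE //.
rewrite /HYA (mi_split (q := q1)) //.
rewrite -/HY EFinM fineK ?fineK; [ | by apply: fin_num_measure; apply: mbigI => q; apply: mpre; [exact: mE | exact: mG2]
  | by apply: fin_num_measure; apply: mpre; [exact: mE | exact: mA] ].
by rewrite muleA [in RHS]muleAC.
Qed.

Lemma Tt_zero : Ex P (Tt i k j l) = 0.
Proof.
have mZ m : measurable_fun setT (Z m).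
  case: m => [[|[|[|[|[|[|[|m]]]]]]] hm]; rewrite /Z /Zl /= ?nth_nil;
    first [exact: mXa | exact: mYe | exact: measurable_cst].
have bZ m w : `|Z m w| <= 1.
  case: m => [[|[|[|[|[|[|[|m]]]]]]] hm]; rewrite /Z /Zl /=;
    rewrite ?nth_nil; first [exact: bXa | exact: bYe | by rewrite normr0].
have bZm m : bm (Z m) by split => //; exists 1.
set g := fun w => \prod_(m < 7) Z m w.
have bg : bm g by apply: bm_prod.
pose Fp := Ye q1 @^-1` [set 1]. pose Fm := Ye q1 @^-1` [set -1].
have mFp : measurable Fp by apply: mpre; [exact: mYe | exact: measurable_set1].
have mFm : measurable Fm by apply: mpre; [exact: mYe | exact: measurable_set1].
have n1 : (1 : R) != -1 by rewrite -subr_eq0 opprK (_ : 1 + 1 = 2) // pnatr_eq0.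
have eT : Tt i k j l = fun w => g w * \1_Fp w - g w * \1_Fm w.
  apply/funext => w; rewrite TtZ -/g !indicE /Fp /Fm.
  case: (vE w q1.1 q1.2) => h.
    rewrite (_ : (w \in _) = true); last by apply/mem_set; rewrite /= /Ye h.
    rewrite (_ : (w \in _) = false); last first.
      by apply/negbTE/negP => /set_mem; rewrite /= /Ye h => /eqP; rewrite (negbTE n1).
    by rewrite /Ye h /g /= mulr1n mulr0n mulr0 !mulr1 subr0.
  rewrite (_ : (w \in Ye q1 @^-1` [set 1]) = false); last first.
    apply/negbTE/negP => /set_mem; rewrite /= /Ye h => /eqP.
    by rewrite eq_sym (negbTE n1).
  rewrite (_ : (w \in _) = true); last by apply/mem_set; rewrite /= /Ye h.
  by rewrite /Ye h /g /= mulr1n mulr0n mulr0 !mulr1 sub0r mulrN1.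
have bFp : bm (\1_Fp : T -> R) by exact: bmI.
have bFm : bm (\1_Fm : T -> R) by exact: bmI.
rewrite eT ExB; [|exact: bmM|exact: bmM].
rewrite /g (factor mZ bZ mFp (hind (measurable_set1 _))) (factor mZ bZ mFm (hind (measurable_set1 _))).
have pFp : fine (P Fp) = 1 / 2.
  by rewrite /Fp /Ye (pE (_ : (q1.2 < q1.1)%N)) //; move: q1S; rewrite inE.
have pFm : fine (P Fm) = 1 - 1 / 2.
  rewrite -pFp -!ExI // -(ExC P 1) -ExB //; last exact: bmC.
  congr (Ex P); apply/funext => w; rewrite !indicE /Fp /Fm.
  case: (vE w q1.1 q1.2) => h.
    rewrite (_ : (w \in Ye q1 @^-1` [set 1]) = true); last by apply/mem_set; rewrite /= /Ye h.
    rewrite (_ : (w \in _) = false) ?subrr //.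
    by apply/negbTE/negP => /set_mem; rewrite /= /Ye h => /eqP; rewrite (negbTE n1).
  rewrite (_ : (w \in Ye q1 @^-1` [set 1]) = false); last first.
    apply/negbTE/negP => /set_mem; rewrite /= /Ye h => /eqP.
    by rewrite eq_sym (negbTE n1).
  rewrite (_ : (w \in _) = true) ?subr0 //; by apply/mem_set; rewrite /= /Ye h.
rewrite pFp pFm; apply/eqP; rewrite subr_eq0; apply/eqP; congr (_ * _).
by field.
Qed.

End Zero.


Lemma mmE w u v : mm w u v = Rm w u v * Bm w u v * Em w u v.
Proof. by rewrite /mm !mxE. Qed.

Lemma bmm u v : bm (fun w => mm w u v).
Proof.
split.
  have -> : (fun w => mm w u v) = (fun w => Rm w u v * Bm w u v * Em w u v).
    by apply/funext => w; rewrite mmE.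
  apply: measurable_realfun.measurable_funM => //.
  exact: measurable_realfun.measurable_funM.
exists 1 => w; rewrite mmE (_ : Rm w u v * Bm w u v = Xa (u, v) w); last by rewrite XaE.
rewrite normrM -[X in _ <= X]mulr1 ler_pM //; [exact: (bXa (u, v)) | exact: (bYe (u, v))].
Qed.

Lemma bBm u v : bm (fun w => Bm w u v).
Proof.
split => //; exists 1 => w.
by case: (vB w u v) => ->; rewrite ?normr0 ?normr1.
Qed.

Lemma bTt i k j l : bm (Tt i k j l).
Proof. by rewrite /Tt; apply: bmM; apply: bmM; exact: bmm. Qed.

Lemma mm_diag w u : mm w u u = 0.
Proof. by rewrite mmE dR !mul0r. Qed.

Lemma mm_sym w u v : mm w u v = mm w v u.
Proof. by rewrite !mmE sR sB sE. Qed.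

Lemma mm_sq w u v : 0 <= mm w u v ^+ 2 <= Bm w u v.
Proof.
rewrite sqr_ge0 /= mmE !exprMn.
have -> : Em w u v ^+ 2 = 1 by case: (vE w u v) => ->; rewrite ?sqrrN expr1n.
case: (vB w u v) => ->; rewrite ?expr0n ?mulr0 ?mul0r // expr1n !mulr1.
have := bR w u v; rewrite -(expr1n _ 2) -[Rm w u v ^+ 2]real_normK ?num_real //.
by move=> h; rewrite ler_pXn2r // ?nnegrE.
Qed.


Lemma Vb_ge0 (x y : 'I_d) : 0 <= Vb rho x y.
Proof. by case/andP: hrho => h0 _; rewrite /Vb; case: ifP => _; rewrite ?exprn_ge0 ?ltW. Qed.

Lemma Ub_ge0 (i k j l : 'I_d) : 0 <= Ub rho i k j l.
Proof. by rewrite /Ub addr_ge0 //; case: ifP => _ //; exact: Vb_ge0. Qed.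

Lemma term_bound i k j l : Ex P (Tt i k j l) <= Ub rho i k j l.
Proof.
have [diag|nd] := boolP ((j == i) || (j == k) || (l == i) || (l == k)).
  have -> : Tt i k j l = fun _ => 0.
    apply/funext => w; rewrite /Tt.
    by move: diag => /orP[/orP[/orP[]|]|] /eqP e; rewrite e mm_diag; ring.
  by rewrite (ExC P 0); exact: Ub_ge0.
move: nd; rewrite !negb_or => /andP[/andP[/andP[hji hjk] hli] hlk].
have [ejl|hjl] := eqVneq j l.
  subst l.
  apply: (@le_trans _ _ (Ex P (fun w => Bm w j i * Bm w j k))).
    apply: (@Ex_le _ _ _ P (Tt i k j j) (fun w => Bm w j i * Bm w j k));
      [exact: bTt | by apply: bmM; exact: bBm | move=> w].
    rewrite /Tt.
    have -> : mm w j i * mm w j k * (mm w j i * mm w j k) = mm w j i ^+ 2 * mm w j k ^+ 2 by ring.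
    have := mm_sq w j i; have := mm_sq w j k => /andP[a0 a1] /andP[b0 b1].
    by apply: ler_pM.
  rewrite Eb2 ?(eq_sym i) ?(eq_sym k) // /Ub eqxx.
  by rewrite -/(Vb rho i k) lerDl; case: ifP => _ //; exact: Vb_ge0.
have [eik|hik] := eqVneq i k.
  subst k.
  apply: (@le_trans _ _ (Ex P (fun w => Bm w i j * Bm w i l))).
    apply: (@Ex_le _ _ _ P (Tt i i j l) (fun w => Bm w i j * Bm w i l));
      [exact: bTt | by apply: bmM; exact: bBm | move=> w].
    rewrite /Tt (mm_sym w j i) (mm_sym w l i).
    have -> : mm w i j * mm w i j * (mm w i l * mm w i l) = mm w i j ^+ 2 * mm w i l ^+ 2.
      by ring.
    have := mm_sq w i j; have := mm_sq w i l => /andP[a0 a1] /andP[b0 b1].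
    by apply: ler_pM.
  rewrite Eb2 // /Ub eqxx -/(Vb rho j l) lerDr.
  by case: ifP => _ //; exact: Vb_ge0.
by rewrite Tt_zero //; exact: Ub_ge0.
Qed.



Definition Mw w := hadamard (hadamard (Rm w) (Bm w)) (Em w).

Lemma QfE w : Qf (Mw w) = \sum_(i < d) \sum_(k < d) \sum_(j < d) \sum_(l < d) Tt i k j l w.
Proof.
rewrite /Qf; apply: eq_bigr => i _; apply: eq_bigr => k _; rewrite sqr_sum.
by apply: eq_bigr => j _; apply: eq_bigr => l _.
Qed.

Lemma bQ : bm (fun w => Qf (Mw w)).
Proof.
have -> : (fun w => Qf (Mw w)) =
  (fun w => \sum_(i < d) \sum_(k < d) \sum_(j < d) \sum_(l < d) Tt i k j l w).
  by apply/funext => w; rewrite QfE.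
apply: bm_sum => i; apply: bm_sum => k; apply: bm_sum => j; apply: bm_sum => l.
exact: bTt.
Qed.

Lemma EQ : Ex P (fun w => Qf (Mw w)) <= 2 * (d%:R ^+ 2 * rho + d%:R ^+ 3 * rho ^+ 2).
Proof.
have -> : (fun w => Qf (Mw w)) =
  (fun w => \sum_(i < d) \sum_(k < d) \sum_(j < d) \sum_(l < d) Tt i k j l w).
  by apply/funext => w; rewrite QfE.
have b3 i k j : bm (fun w => \sum_(l < d) Tt i k j l w) by apply: bm_sum => l; exact: bTt.
have b2 i k : bm (fun w => \sum_(j < d) \sum_(l < d) Tt i k j l w) by apply: bm_sum => j.
have b1 i : bm (fun w => \sum_(k < d) \sum_(j < d) \sum_(l < d) Tt i k j l w) by apply: bm_sum => k.
rewrite Ex_sum //.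
apply: (@le_trans _ _ (\sum_(i < d) \sum_(k < d) \sum_(j < d) \sum_(l < d) Ub rho i k j l)); last first.
  by apply: sumU; case/andP: hrho => h _; exact: ltW.
apply: ler_sum => i _; rewrite Ex_sum //; apply: ler_sum => k _.
rewrite Ex_sum //; apply: ler_sum => j _; rewrite Ex_sum; last by move=> l; exact: bTt.
by apply: ler_sum => l _; exact: term_bound.
Qed.

Lemma final :
  ('E_P[fun w => opnorm (Mw w)] <=
    (2 * (d%:R) `^ (1 / 2) * rho `^ (1 / 4)
     + 2 * (d%:R) `^ (3 / 4) * rho `^ (1 / 2))%:E)%E.
Proof.
case/andP: hrho => r0 r1.
have [d0|dpos] := posnP d.
  have z w : opnorm (Mw w) = 0.
    have Q0 : Qf (Mw w) = 0.
      by rewrite /Qf big1 // => -[m hm]; exfalso; move: hm; rewrite d0.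
    apply/eqP; rewrite eq_le; apply/andP; split; last by case: (opnorm_bound (Mw w) ltr01).
    rewrite leNgt; apply/negP => hp.
    have [_ h] := opnorm_bound (Mw w) hp.
    move: h; rewrite Q0 mul0r addr0 => h.
    have : opnorm (Mw w) < opnorm (Mw w).
      apply: (le_lt_trans h); rewrite -[X in _ < X]mul1r ltr_pM2r // ltr_pdivrMr //.
      by rewrite mul1r ltr_nat.
    by rewrite ltxx.
  have -> : (fun w => opnorm (Mw w)) = (fun _ => 0) by apply/funext => w; exact: z.
  rewrite expectation_cst lee_fin.
  by rewrite addr_ge0 // !mulr_ge0 // powR_ge0.
have dpos' : 0 < d%:R :> R by rewrite ltr0n.
have [t0 ht] := final_arith dpos' r0 EQ.
set t := 2 * _ in t0 ht.
have bF : bm (fun w => 3 / 4 * t + (4 * t ^+ 3)^-1 * Qf (Mw w)).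
  by apply: bmD; [exact: bmC | apply: bmM; [exact: bmC | exact: bQ]].
apply: le_trans (ge0_le_E (g := fun w => 3 / 4 * t + (4 * t ^+ 3)^-1 * Qf (Mw w)) _ _ _) _.
- by move=> w; case: (opnorm_bound (Mw w) t0).
- by move=> w; case: (opnorm_bound (Mw w) t0) => _; rewrite [(4 * t ^+ 3)^-1 * _]mulrC.
rewrite ExE // lee_fin ExD //; [|exact: bmC| apply: bmM; [exact: bmC | exact: bQ]].
rewrite ExC ExZ; last exact: bQ.
have -> : 2 * d%:R `^ (1 / 2) * rho `^ (1 / 4) + 2 * d%:R `^ (3 / 4) * rho `^ (1 / 2) = t.
  by rewrite /t; ring.
by rewrite [(4 * t ^+ 3)^-1 * _]mulrC.
Qed.

End Main.

Unset Implicit Arguments.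

Theorem lemma2 (R : realType) :
  exists K1 K2 : R,
  forall (d : nat) (rho : R) (dT : measure_display) (T : measurableType dT)
    (P : probability T R) (Rm Bm Em : T -> 'M[R]_d),
  0 < rho < 1 ->
  (* R: symmetric, zero diagonal, mean-zero entries bounded by 1 *)
  (forall i j, measurable_fun setT (fun w => Rm w i j)) ->
  (forall w i j, Rm w i j = Rm w j i) ->
  (forall w i, Rm w i i = 0) ->
  (forall w i j, `|Rm w i j| <= 1) ->
  (forall i j, ('E_P[fun w => Rm w i j] = 0)%E) ->
  (* B: symmetric 0/1 matrix, b_ij (i<j) iid Bernoulli(rho) *)
  (forall i j, measurable_fun setT (fun w => Bm w i j)) ->
  (forall w i j, Bm w i j = Bm w j i) ->
  (forall w i j, Bm w i j = 0 \/ Bm w i j = 1) ->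
  (forall i j : 'I_d, (i < j)%N -> P ((fun w => Bm w i j) @^-1` [set 1]) = rho%:E) ->
  mutually_independent P [set p : 'I_d * 'I_d | (p.1 < p.2)%N]
    (fun p w => Bm w p.1 p.2) ->
  (* E: symmetric sign matrix, eps_ij (j<i) iid Rademacher, independent of A *)
  (forall i j, measurable_fun setT (fun w => Em w i j)) ->
  (forall w i j, Em w i j = Em w j i) ->
  (forall w i j, Em w i j = 1 \/ Em w i j = -1) ->
  (forall i j : 'I_d, (j < i)%N ->
     P ((fun w => Em w i j) @^-1` [set 1]) = (1 / 2)%:E) ->
  mutually_independent P [set p : 'I_d * 'I_d | (p.2 < p.1)%N]
    (fun p w => Em w p.1 p.2) ->
  independent_families P
    (fun p w => hadamard (Rm w) (Bm w) p.1 p.2) (fun p w => Em w p.1 p.2) ->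
  ('E_P[fun w => opnorm (hadamard (hadamard (Rm w) (Bm w)) (Em w))] <=
    (K1 * (d%:R) `^ (1 / 2) * rho `^ (1 / 4)
     + K2 * (d%:R) `^ (3 / 4) * rho `^ (1 / 2))%:E)%E.
Proof.
exists 2, 2 => d rho dT T P Rm Bm Em hrho mR sR dR bR hE0 mB sB vB pB iB mE sE vE pE iE iAE.
by apply: final.
Qed.
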